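(* Let $f_0,\ldots,f_{k-1}$, $k\ge2$, be diffeomorphisms of $S^n$ generating a minimal iterated function system, where $f_0$ is a north–south diffeomorphism with hyperbolic repelling fixed point $P_0$. Let $m$ be a stationary measure for the iterated function system with probabilities $p_0,\ldots,p_{k-1}$. Then $m(\{P_0\})=0$.
   Context: A north–south diffeomorphism of $S^n$ has a hyperbolic repelling fixed point $P_0$ and a hyperbolic attracting fixed point $Q_0$ whose basin of attraction is $S^n\setminus\{P_0\}$. The iterated function system is minimal if for every $x\in S^n$ some sequence $x_0=x$, $x_{j+1}=f_{i_j}(x_j)$ is dense in $S^n$. Given probabilities $p_i\in(0,1)$ with $\sum p_i=1$, a stationary measure is a Borel probability measure $m$ with $m=\sum_i p_i f_i m$, where $f_im(A)=m(f_i^{-1}(A))$. *)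

(* Defs.v *)
From HB Require Import structures.
From mathcomp Require Import all_boot all_order all_algebra.
From mathcomp Require Import all_classical all_reals all_analysis.
Set Implicit Arguments. Unset Strict Implicit. Unset Printing Implicit Defensive.
Import Order.TTheory GRing.Theory Num.Theory.
Import numFieldNormedType.Exports.
Local Open Scope classical_set_scope.
Local Open Scope ring_scope.

(* Ambient space R^{n+1}, realised as row vectors 'rV[R]_(n.+1).
   (Its normed topology is the usual topology of R^{n+1}.) *)
Notation Rn1 R n := 'rV[R]_(n.+1).

Definition dotv {R : realType} {n : nat} (x y : Rn1 R n) : R :=
  \sum_(i < n.+1) x ord0 i * y ord0 i.

Definition unit_sph (R : realType) (n : nat) : set (Rn1 R n) :=
  [set x | dotv x x = 1].
Arguments unit_sph : clear implicits.

Definition tangent {R : realType} {n : nat} (P : Rn1 R n) : set (Rn1 R n) :=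
  [set v | dotv P v = 0].

Fixpoint iterD {R : realType} {n : nat} (vs : seq (Rn1 R n))
    (g : Rn1 R n -> Rn1 R n) : Rn1 R n -> Rn1 R n :=
  match vs with
  | [::] => g
  | v :: vs' => fun x => 'd (iterD vs' g) x v
  end.

Definition smooth_on {R : realType} {n : nat} (U : set (Rn1 R n))
    (g : Rn1 R n -> Rn1 R n) : Prop :=
  forall (vs : seq (Rn1 R n)) x, U x -> differentiable (iterD vs g) x.

Definition smooth_ext {R : realType} {n : nat} (f F : Rn1 R n -> Rn1 R n) :=
  exists U : set (Rn1 R n), [/\ open U, unit_sph R n `<=` U, smooth_on U F &
    forall x, unit_sph R n x -> F x = f x].

Definition sph_smooth {R : realType} {n : nat} (f : Rn1 R n -> Rn1 R n) :=
  (forall x, unit_sph R n x -> unit_sph R n (f x)) /\ exists F, smooth_ext f F.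

(* Diffeomorphism of S^n (only the values of f on S^n matter). *)
Definition sph_diffeo {R : realType} {n : nat} (f : Rn1 R n -> Rn1 R n) :=
  sph_smooth f /\ exists g : Rn1 R n -> Rn1 R n, [/\ sph_smooth g,
    (forall x, unit_sph R n x -> g (f x) = x) &
    (forall x, unit_sph R n x -> f (g x) = x)].

(* (a + i b) is a (complex) eigenvalue of the real linear map L restricted
   to the tangent space T_P S^n, with eigenvector u + i w (u, w in T_P S^n,
   not both zero), i.e. L(u + i w) = (a + i b)(u + i w). *)
Definition tangent_eigen {R : realType} {n : nat} (P : Rn1 R n)
    (L : Rn1 R n -> Rn1 R n) (a b : R) : Prop :=
  exists u w, [/\ tangent P u, tangent P w, (u != 0) || (w != 0),
    L u = a *: u - b *: w & L w = b *: u + a *: w].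

Definition hyp_repelling {R : realType} {n : nat} (f : Rn1 R n -> Rn1 R n)
    (P : Rn1 R n) : Prop :=
  [/\ unit_sph R n P, f P = P &
    exists F, smooth_ext f F /\
      forall a b, tangent_eigen P ('d F P) a b -> 1 < a ^+ 2 + b ^+ 2].

Definition hyp_attracting {R : realType} {n : nat} (f : Rn1 R n -> Rn1 R n)
    (P : Rn1 R n) : Prop :=
  [/\ unit_sph R n P, f P = P &
    exists F, smooth_ext f F /\
      forall a b, tangent_eigen P ('d F P) a b -> a ^+ 2 + b ^+ 2 < 1].

Definition north_south {R : realType} {n : nat} (f : Rn1 R n -> Rn1 R n)
    (P0 Q0 : Rn1 R n) : Prop :=
  [/\ sph_diffeo f, hyp_repelling f P0, hyp_attracting f Q0 &
    forall x, unit_sph R n x ->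
      ((fun j => iter j f x) @ \oo --> Q0 <-> x <> P0)].

Fixpoint ifs_orbit {R : realType} {n k : nat} (f : 'I_k -> Rn1 R n -> Rn1 R n)
    (x : Rn1 R n) (s : nat -> 'I_k) (j : nat) : Rn1 R n :=
  match j with
  | 0 => x
  | j'.+1 => f (s j') (ifs_orbit f x s j')
  end.

Definition ifs_minimal {R : realType} {n k : nat}
    (f : 'I_k -> Rn1 R n -> Rn1 R n) : Prop :=
  forall x, unit_sph R n x -> exists s : nat -> 'I_k,
    unit_sph R n `<=` closure (range (ifs_orbit f x s)).

Definition BorelRn (R : realType) (n : nat) :=
  g_sigma_algebraType (@open (Rn1 R n)).
Arguments BorelRn : clear implicits.

(* m is a stationary Borel probability measure on S^n: a Borel probability on
   R^{n+1} carried by S^n with m(A) = sum_i p_i m(f_i^{-1}(A)) (preimages taken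
   inside S^n) for every Borel A. *)
Definition stationary {R : realType} {n k : nat}
    (f : 'I_k -> Rn1 R n -> Rn1 R n) (p : 'I_k -> R)
    (m : probability (BorelRn R n) R) : Prop :=
  m (unit_sph R n) = 1%E /\
  forall A : set (BorelRn R n), measurable A ->
    m A = (\sum_(i < k) (p i)%:E * m (unit_sph R n `&` f i @^-1` A))%E.

(* Main.v *)
Require Import Defs.
From HB Require Import structures.
From mathcomp Require Import all_boot all_order all_algebra.
From mathcomp Require Import all_classical all_reals all_analysis.
Import Order.TTheory GRing.Theory Num.Theory.
Import numFieldNormedType.Exports.
Local Open Scope classical_set_scope.
Local Open Scope ring_scope.

Lemma list_max (R : realType) (T : eqType) (w : T -> R) (l : seq T) x0 :
  x0 \in l -> exists x, x \in l /\ forall y, y \in l -> w y <= w x.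
Proof.
elim: l x0 => // a l IH x0; rewrite inE => /orP [/eqP _|hx].
  case: l IH => [_|b l IH].
    by exists a; split; [rewrite inE|move=> y; rewrite inE => /eqP ->].
  have [x [xl hx]] := IH b (mem_head _ _).
  case: (leP (w x) (w a)) => h.
    exists a; split; first exact: mem_head.
    by move=> y; rewrite inE => /orP [/eqP ->//|/hx hy]; apply: le_trans h.
  exists x; split; first by rewrite inE xl orbT.
  by move=> y; rewrite inE => /orP [/eqP ->|/hx //]; apply: ltW.
have [x [xl hx']] := IH x0 hx.
case: (leP (w x) (w a)) => h.
  exists a; split; first exact: mem_head.
  by move=> y; rewrite inE => /orP [/eqP ->//|/hx' hy]; apply: le_trans h.
exists x; split; first by rewrite inE xl orbT.
by move=> y; rewrite inE => /orP [/eqP ->|/hx' //]; apply: ltW.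
Qed.

Lemma sum_lb (R : realType) (T : eqType) (w : T -> R) (c : R) (l : seq T) :
  (forall x, x \in l -> c <= w x) -> (size l)%:R * c <= \sum_(x <- l) w x.
Proof.
elim: l => [|a l IH] h; first by rewrite big_nil mul0r.
rewrite big_cons /= -addn1 natrD mulrDl mul1r addrC.
apply: lerD; first by apply: h; exact: mem_head.
by apply: IH => x xl; apply: h; rewrite inE xl orbT.
Qed.

Lemma comb (R : realType) (T : eqType) (k : nat) (S : set T) (w : T -> R)
  (g f : 'I_k -> T -> T) (p : 'I_k -> R) :
  (forall i x, S x -> S (g i x)) ->
  (forall i x, S x -> f i (g i x) = x) ->
  (forall i, 0 < p i) -> \sum_i p i = 1 ->
  (forall x, S x -> w x = \sum_i p i * w (g i x)) ->
  (forall x, 0 <= w x) ->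
  (forall l, uniq l -> (forall x, x \in l -> S x) -> \sum_(x <- l) w x <= 1) ->
  forall x0, S x0 -> 0 < w x0 ->
  exists s : seq T, exists y, [/\ y \in s, (forall z, z \in s -> S z) &
     forall i z, z \in s -> f i z \in s].
Proof.
move=> Sg fg pp p1 wS w0 wle x0 Sx0 wx0.
set c := w x0.
pose E x := S x /\ c <= w x.
pose P j := `[< exists l, [/\ uniq l, size l = j & forall x, x \in l -> E x] >].
have P0 : exists j, P j by exists 0%N; apply/asboolP; exists [::].
have Pb : forall j, P j -> (j <= Num.truncn (c^-1))%N.
  move=> j /asboolP [l [ul <- lE]].
  have ci : 0 <= c^-1 by rewrite invr_ge0 ltW.
  rewrite (truncn_ge_nat _ ci).
  have h1 := @sum_lb _ _ w c l (fun x xl => (lE x xl).2).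
  have h2 := wle l ul (fun x xl => (lE x xl).1).
  by rewrite -(mul1r c^-1) ler_pdivlMr // (le_trans h1 h2).
case: (ex_maxnP P0 Pb) => j /asboolP [l [ul sl lE]] jmax.
have Ein : forall x, E x -> x \in l.
  move=> x Ex; apply/negPn/negP => xnl.
  have : P j.+1 by apply/asboolP; exists (x :: l); split;
    [rewrite /= xnl ul | rewrite /= sl | move=> y; rewrite inE => /orP [/eqP ->|/lE]].
  by move/jmax; rewrite ltnn.
have x0l : x0 \in l by apply: Ein; split.
have [xM [xMl xMmax]] := @list_max R T w l x0 x0l.
set M := w xM.
have cM : c <= M := xMmax _ x0l.
have Mmax : forall y, S y -> w y <= M.
  move=> y Sy; case: (leP c (w y)) => h; first by apply: xMmax; apply: Ein.
  by apply: ltW; apply: lt_le_trans cM.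
pose s := [seq x <- l | w x == M].
have ins : forall z, z \in s = (z \in l) && (w z == M) by move=> z; rewrite mem_filter andbC.
have sS : forall z, z \in s -> S z by move=> z; rewrite ins => /andP [/lE []].
have gs : forall i z, z \in s -> g i z \in s.
  move=> i z zs; have Sz := sS z zs.
  move: zs; rewrite ins => /andP [_ /eqP wz].
  have hsum : \sum_i p i * (M - w (g i z)) = 0.
    under eq_bigr do rewrite mulrBr.
    by rewrite sumrB -mulr_suml p1 mul1r -(wS z Sz) wz subrr.
  have hnn : forall i0 : 'I_k, xpredT i0 -> 0 <= p i0 * (M - w (g i0 z)).
    move=> i0 _; apply: mulr_ge0; first exact: ltW.
    by rewrite subr_ge0; apply: Mmax; apply: Sg.
  have := @psumr_eq0P _ _ xpredT _ hnn hsum i isT.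
  move/eqP; rewrite mulf_eq0 (gt_eqF (pp i)) /= subr_eq0 => /eqP h.
  rewrite ins -h eqxx andbT; apply: Ein; split; first exact: Sg.
  by rewrite -h.
exists s, xM; split => //; first by rewrite ins xMl eqxx.
move=> i z zs.
have ginj : {in s &, injective (g i)}.
  by move=> a b /sS Sa /sS Sb hab; rewrite -(fg i a Sa) hab fg.
have u1 : uniq (map (g i) s) by rewrite map_inj_in_uniq // filter_uniq.
have s1 : {subset map (g i) s <= s} by move=> y /mapP [a al ->]; apply: gs.
have [_ hperm] := uniq_min_size u1 s1 (eq_leq (esym (size_map _ _))).
move: zs; rewrite -hperm => /mapP [a al ->].
by rewrite fg //; apply: sS.
Qed.

Lemma meas1 {R : realType} {n : nat} (x : Rn1 R n) :
  measurable ([set x] : set (BorelRn R n)).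
Proof.
rewrite -(setCK [set x]); apply: measurableC; apply: sub_gen_smallest.
apply: closed_openC; apply: accessible_closed_set1; apply: hausdorff_accessible.
exact: norm_hausdorff.
Qed.

Lemma meas_seq {R : realType} {n : nat} (l : seq (Rn1 R n)) :
  measurable ([set y | y \in l] : set (BorelRn R n)).
Proof.
elim: l => [|a l IH].
  by rewrite (_ : [set y | _] = set0); [exact: measurable0|apply/seteqP; split => y].
rewrite (_ : [set y | y \in a :: l] = [set a] `|` [set y | y \in l]).
  by apply: measurableU; [exact: meas1|exact: IH].
apply/seteqP; split => y /=; rewrite inE.
  by case/orP => [/eqP ->|h]; [left|right].
by case => [->|->]; rewrite ?eqxx ?orbT.
Qed.

Lemma closed_seq {R : realType} {n : nat} (l : seq (Rn1 R n)) :
  closed [set y | y \in l].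
Proof.
have c1 : forall x : Rn1 R n, closed [set x].
  move=> x; apply: accessible_closed_set1; apply: hausdorff_accessible.
  exact: norm_hausdorff.
elim: l => [|a l IH].
  by rewrite (_ : [set y | _] = set0); [exact: closed0|apply/seteqP; split => y].
rewrite (_ : [set y | y \in a :: l] = [set a] `|` [set y | y \in l]).
  exact: closedU.
apply/seteqP; split => y /=; rewrite inE.
  by case/orP => [/eqP ->|h]; [left|right].
by case => [->|->]; rewrite ?eqxx ?orbT.
Qed.

Lemma meas_sum {R : realType} {n : nat} (m : probability (BorelRn R n) R)
  (l : seq (Rn1 R n)) : uniq l ->
  m [set y | y \in l] = (\sum_(y <- l) m [set y])%E.
Proof.
elim: l => [|a l IH] /=.
  move=> _; rewrite big_nil (_ : [set y | _] = set0) ?measure0 //.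
  by apply/seteqP; split => y.
move=> /andP [al ul]; rewrite big_cons -IH //.
rewrite (_ : [set y | y \in a :: l] = [set a] `|` [set y | y \in l]).
  rewrite measureU //; [exact: meas1|exact: meas_seq|].
  by apply/seteqP; split => y //= [-> ya]; move: al; rewrite ya.
apply/seteqP; split => y /=; rewrite inE.
  by case/orP => [/eqP ->|h]; [left|right].
by case => [->|->]; rewrite ?eqxx ?orbT.
Qed.

Lemma fin1 {R : realType} {n : nat} (m : probability (BorelRn R n) R)
  (x : Rn1 R n) : m [set x] = (fine (m [set x]))%:E.
Proof.
rewrite fineK // ge0_fin_numE //.
by apply: (le_lt_trans (probability_le1 m (meas1 x))); rewrite ltry.
Qed.

Theorem lemma3p4 (R : realType) (n k : nat) (f : 'I_k -> 'rV[R]_(n.+1) -> 'rV[R]_(n.+1))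
  (p : 'I_k -> R) (m : probability (BorelRn R n) R)
  (i0 : 'I_k) (P0 Q0 : 'rV[R]_(n.+1)) :
  (1 <= n)%N -> (2 <= k)%N ->
  (forall i, sph_diffeo (f i)) ->
  ifs_minimal f ->
  north_south (f i0) P0 Q0 ->
  (forall i, 0 < p i < 1) -> \sum_(i < k) p i = 1 ->
  stationary f p m ->
  m [set P0] = 0%E.
Proof.
move=> n1 _ Hd Hmin [_ [SP0 _ _] _ _] hp p1 [_ Hst].
pose g i := projT1 (cid (Hd i).2).
have gP : forall i, [/\ sph_smooth (g i),
    (forall x, unit_sph R n x -> g i (f i x) = x) &
    (forall x, unit_sph R n x -> f i (g i x) = x)].
  by move=> i; exact: (projT2 (cid (Hd i).2)).
have Sg : forall i x, unit_sph R n x -> unit_sph R n (g i x).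
  by move=> i x Sx; case: (gP i) => [[h _] _ _]; exact: h.
have fg : forall i x, unit_sph R n x -> f i (g i x) = x.
  by move=> i x Sx; case: (gP i) => _ _ h; exact: h.
have gf : forall i x, unit_sph R n x -> g i (f i x) = x.
  by move=> i x Sx; case: (gP i) => _ h _; exact: h.
pose w x := fine (m [set x]).
have w0 : forall x, 0 <= w x.
  by move=> x; rewrite /w fine_ge0.
have wS : forall x, unit_sph R n x -> w x = \sum_i p i * w (g i x).
  move=> x Sx; rewrite /w (Hst _ (meas1 x)).
  have E : forall i, (unit_sph R n `&` f i @^-1` [set x] : set (BorelRn R n)) = [set g i x].
    move=> i; apply/seteqP; split => y /=.
      by case=> Sy <-; rewrite gf.
    by move=> ->; split; [exact: Sg|exact: fg].
  under eq_bigr => i _ do rewrite E fin1 -EFinM.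
  by rewrite sumEFin.
have wle : forall l, uniq l -> (forall x, x \in l -> unit_sph R n x) ->
    \sum_(x <- l) w x <= 1.
  move=> l ul _.
  have := probability_le1 m (meas_seq l); rewrite meas_sum //.
  under eq_bigr do rewrite fin1.
  by rewrite sumEFin lee_fin.
apply/eqP/negPn/negP => hne.
have wP0 : 0 < w P0.
  rewrite lt_def w0 andbT; apply: contra hne => /eqP h.
  by rewrite fin1 -/(w P0) h.
have [s [y [ys sS fs]]] := @comb R _ k (unit_sph R n) w g f p Sg fg
  (fun i => (andP (hp i)).1) p1 wS w0 wle P0 SP0 wP0.
have [sq hsq] := Hmin y (sS y ys).
have orb : forall j, ifs_orbit f y sq j \in s.
  by elim=> [|j IH] //=; apply: fs.
have Ssub : unit_sph R n `<=` [set z | z \in s].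
  move=> z /hsq; rewrite [X in _ -> X z](closure_id _).1; last exact: closed_seq.
  by apply: closureS => _ [j _ <-]; exact: orb.
have [n' en] : exists n', n = n'.+1 by case: n n1 {hsq Ssub SP0 Hmin Hd Hst f g gP Sg fg gf w w0 wS wle s y ys sS fs sq orb P0 Q0 m hne wP0} => // n' _; exists n'.
subst n.
pose a (t : nat) : R := ((t.+1)%:R)^-1.
pose pt (t : nat) : Rn1 R n'.+1 := \row_(j < n'.+2)
  (if (j : nat) == 0%N then a t else if (j : nat) == 1%N then Num.sqrt (1 - a t ^+ 2) else 0).
have a0 : forall t, 0 <= a t by move=> t; rewrite invr_ge0.
have a1 : forall t, a t <= 1 by move=> t; rewrite invf_le1 // ler1n.
have Spt : forall t, unit_sph R n'.+1 (pt t).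
  move=> t; rewrite /unit_sph /dotv /= !big_ord_recl big1 ?addr0; last first.
    by move=> i _; rewrite /pt !mxE /= mul0r.
  rewrite /pt !mxE /= -!expr2 sqr_sqrtr; first by rewrite addrC subrK.
  by rewrite subr_ge0 exprn_ile1.
have ptinj : injective pt.
  move=> t u /(congr1 (fun v : Rn1 R n'.+1 => v ord0 ord0)); rewrite /pt !mxE /=.
  by move/invr_inj/eqP; rewrite eqr_nat => /eqP [].
have := uniq_leq_size (s1 := map pt (iota 0 (size s).+1)) (s2 := s).
rewrite map_inj_uniq // iota_uniq size_map size_iota ltnn.
move=> /(_ isT) H.
have hsub : {subset [seq pt i | i <- iota 0 (size s).+1] <= s}.
  by move=> z /mapP [t _ ->]; exact: (Ssub _ (Spt t)).
by have := H hsub.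
Qed.
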